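(* Let $u,v:\mathbb{Z}\times[0,1]\to\mathbb{R}$ have at most polynomial growth in their first variable, let $u$ be upper-semicontinuous (in $t$) and a viscosity subsolution, and $v$ lower-semicontinuous and a viscosity supersolution, of $-w_t(y,t)-\beta(w(y+1,t)-2w(y,t)+w(y-1,t))=0$ on $\mathbb{Z}\times[0,1)$. If $u(\cdot,1)\le v(\cdot,1)$, then $u\le v$ on $\mathbb{Z}\times[0,1)$.
   Context: $\beta>0$. A function $w$ on $\mathbb{Z}\times[0,1]$ has at most polynomial growth if $|w(y,t)|\le C(1+|y|^k)$ for some $C,k$. For locally bounded $w$, $w^*(y,t)=\limsup_{t'\to t}w(y,t')$ and $w_*(y,t)=\liminf_{t'\to t}w(y,t')$. $w$ is a viscosity subsolution (resp. supersolution) of the equation if for every $(y,t)\in\mathbb{Z}\times[0,1)$ and every $\varphi:\mathbb{Z}\times[0,1]\to\mathbb{R}$ continuously differentiable in $t$ such that $(y,t)$ is a maximum point of $w^*-\varphi$ (resp. minimum point of $w_*-\varphi$), one has $-\varphi_t(y,t)-\beta(w^*(y+1,t)-2w^*(y,t)+w^*(y-1,t))\le0$ (resp. $-\varphi_t(y,t)-\beta(w_*(y+1,t)-2w_*(y,t)+w_*(y-1,t))\ge0$). *)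

(* Defs.v *)
From HB Require Import structures.
From mathcomp Require Import all_boot all_order all_algebra.
From mathcomp Require Import all_classical all_reals all_analysis.
Set Implicit Arguments. Unset Strict Implicit. Unset Printing Implicit Defensive.
Import Order.TTheory GRing.Theory Num.Theory.
Import numFieldNormedType.Exports.
Local Open Scope classical_set_scope.
Local Open Scope ring_scope.

(* A function w : Z x [0,1] -> R is modelled as w : int -> R -> R; only the
   values at times t with 0 <= t <= 1 are ever used below. *)

Definition inI {R : realType} (t : R) : Prop := 0 <= t <= 1.

Definition poly_growth {R : realType} (w : int -> R -> R) : Prop :=
  exists (C : R) (k : nat), forall (y : int) (t : R), inI t ->
    `|w y t| <= C * (1 + (`|y|%:~R) ^+ k).

Definition usc_t {R : realType} (w : int -> R -> R) : Prop :=
  forall (y : int) (t : R), inI t -> forall e : R, 0 < e ->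
    exists2 d : R, 0 < d & forall s : R, inI s -> `|s - t| < d -> w y s < w y t + e.

Definition lsc_t {R : realType} (w : int -> R -> R) : Prop :=
  forall (y : int) (t : R), inI t -> forall e : R, 0 < e ->
    exists2 d : R, 0 < d & forall s : R, inI s -> `|s - t| < d -> w y t - e < w y s.

Definition ustar {R : realType} (w : int -> R -> R) (y : int) (t : R) : R :=
  inf [set sup [set w y s | s in [set s | inI s /\ `|s - t| < d]]
      | d in [set d : R | 0 < d]].

Definition lstar {R : realType} (w : int -> R -> R) (y : int) (t : R) : R :=
  sup [set inf [set w y s | s in [set s | inI s /\ `|s - t| < d]]
      | d in [set d : R | 0 < d]].

Definition C1_t {R : realType} (phi dphi : int -> R -> R) : Prop :=
  forall y : int,
    (forall t : R, inI t ->
       (fun h : R => h^-1 * (phi y (t + h) - phi y t))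
         @ within [set h : R | h != 0 /\ inI (t + h)] (nbhs (0 : R))
       --> dphi y t)
    /\ {within [set s : R | inI s], continuous (dphi y)}.

Definition dlap {R : realType} (w : int -> R -> R) (y : int) (t : R) : R :=
  w (y + 1)%R t - 2 * w y t + w (y - 1)%R t.

Definition visc_sub {R : realType} (beta : R) (w : int -> R -> R) : Prop :=
  forall (y : int) (t : R), 0 <= t < 1 ->
  forall phi dphi : int -> R -> R, C1_t phi dphi ->
    (forall (y' : int) (t' : R), inI t' ->
       ustar w y' t' - phi y' t' <= ustar w y t - phi y t) ->
    - dphi y t - beta * dlap (ustar w) y t <= 0.

Definition visc_super {R : realType} (beta : R) (w : int -> R -> R) : Prop :=
  forall (y : int) (t : R), 0 <= t < 1 ->
  forall phi dphi : int -> R -> R, C1_t phi dphi ->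
    (forall (y' : int) (t' : R), inI t' ->
       lstar w y t - phi y t <= lstar w y' t' - phi y' t') ->
    - dphi y t - beta * dlap (lstar w) y t >= 0.

(* Main.v *)
Require Import Defs.
From HB Require Import structures.
From mathcomp Require Import all_boot all_order all_algebra.
From mathcomp Require Import all_classical all_reals all_analysis.
From mathcomp Require Import ring lra.
Import Order.TTheory GRing.Theory Num.Theory.
Import numFieldNormedType.Exports.
Local Open Scope classical_set_scope.
Local Open Scope ring_scope.

Section Aux.
Variable R : realType.
HB.instance Definition _ := isPointed.Build (R * R)%type (0, 0).

Lemma seq_argmax (T : eqType) (F : T -> R) (s : seq T) : s != [::] ->
  exists2 x, x \in s & forall z, z \in s -> F z <= F x.
Proof.
elim: s => [//|a s IH] _.
case: s IH => [|b s] IH.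
  by exists a; rewrite ?mem_head // => z; rewrite inE => /eqP ->.
have [x xs Hx] := IH isT.
have [le|lt] := leP (F a) (F x).
  exists x; first by rewrite inE xs orbT.
  by move=> z; rewrite inE => /orP [/eqP ->//|]; exact: Hx.
exists a; first exact: mem_head.
move=> z; rewrite inE => /orP [/eqP ->//|/Hx H]; exact: (le_trans H (ltW lt)).
Qed.

Lemma inI01 (t : R) : inI t <-> (`[0, 1]%classic : set R) t.
Proof. by rewrite /inI /= in_itv. Qed.

Lemma max2 (G : R -> R -> R) :
  (forall t s, inI t -> inI s -> forall m, G t s < m ->
     exists2 d : R, 0 < d & forall t' s', inI t' -> inI s' ->
       `|t' - t| < d -> `|s' - s| < d -> G t' s' < m) ->
  exists t s, [/\ inI t, inI s & forall t' s', inI t' -> inI s' -> G t' s' <= G t s].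
Proof.
move=> Husc; apply: contrapT => Hno.
pose A : set (R * R) := `[0, 1]%classic `*` `[0, 1]%classic.
have HA p : A p <-> inI p.1 /\ inI p.2 by rewrite /A /= !inI01.
have Hq : forall p : R * R, exists q : R * R,
    A p -> A q /\ G p.1 p.2 < G q.1 q.2.
  move=> p; case: (pselect (A p)) => Ap; last by exists p.
  apply: contrapT => Hn; apply: Hno; exists p.1, p.2.
  have [a1 a2] := (HA p).1 Ap; split => // t' s' It Is.
  rewrite leNgt; apply/negP => Hlt; apply: Hn; exists (t', s') => _.
  by split => //; apply/HA.
have [fq Hfq] := choice Hq.
have Hd : forall p : R * R, exists d : R,
    A p -> 0 < d /\ forall t' s', inI t' -> inI s' ->
       `|t' - p.1| < d -> `|s' - p.2| < d -> G t' s' < G (fq p).1 (fq p).2.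
  move=> p; case: (pselect (A p)) => Ap; last by exists 1.
  have [a1 a2] := (HA p).1 Ap.
  have [_ lt] := Hfq p Ap.
  have [d d0 Hd] := Husc _ _ a1 a2 _ lt.
  by exists d.
have [fd Hfd] := choice Hd.
have cA : cover_compact A.
  rewrite -(@compact_cover (R * R)%type); apply: compact_setX; exact: segment_compact.
have [D' sD' cov] : finite_subset_cover A (fun p => ball p (fd p)) A.
  apply: cA; first by move=> p _; exact: ball_open.
  move=> p Ap; exists p => //; apply: ballxx; exact: (Hfd p Ap).1.
have A00 : A (0, 0) by apply/HA; rewrite /inI /= lexx ler01.
have D'n0 : finmap.enum_fset D' != [::].
  have [p Dp _] := cov _ A00.
  apply/eqP => E; have : p \in finmap.enum_fset D' by exact: Dp.
  by rewrite E.
have [ps psD Hps] := @seq_argmax _ (fun p => G (fq p).1 (fq p).2) _ D'n0.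
have Aps : A ps by have := sD' _ psD; rewrite inE.
have [Aq _] := Hfq ps Aps.
have [p Dp bp] := cov _ Aq.
have Ap : A p by have := sD' _ Dp; rewrite inE.
have [a1 a2] := (HA _).1 Aq.
move: bp => [/= b1 b2].
rewrite -ball_normE /= in b1 b2.
have := (Hfd p Ap).2 _ _ a1 a2.
rewrite !(distrC _ p.1) !(distrC _ p.2) => /(_ b1 b2) Hlt.
have := Hps p Dp.
by rewrite leNgt Hlt.
Qed.


Lemma pg_bound (w : int -> R -> R) : poly_growth w ->
  forall y, exists B : R, forall s, inI s -> `|w y s| <= B.
Proof. by move=> [C [k Hw]] y; exists (C * (1 + `|y|%:~R ^+ k)) => s /Hw. Qed.

Lemma ustar_eq (w : int -> R -> R) : poly_growth w -> usc_t w ->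
  forall y t, inI t -> ustar w y t = w y t.
Proof.
move=> pg usc y t It.
have [B HB] := @pg_bound w pg y.
pose S d := [set w y s | s in [set s | inI s /\ `|s - t| < d]].
have Sn0 d : 0 < d -> S d !=set0.
  by move=> d0; exists (w y t); exists t => //; split => //; rewrite subrr normr0.
have Sub d : has_ubound (S d).
  by exists B => _ [s [Is _] <-]; exact: le_trans (ler_norm _) (HB s Is).
have Sge d : 0 < d -> w y t <= sup (S d).
  move=> d0; apply: ub_le_sup (Sub d) _ _.
  by exists t => //; split => //; rewrite subrr normr0.
rewrite /ustar -/S.
have Tn0 : [set sup (S d) | d in [set d : R | 0 < d]] !=set0.
  by exists (sup (S 1)); exists 1 => //; exact: ltr01.
apply/eqP; rewrite eq_le; apply/andP; split; last first.
  apply: lb_le_inf Tn0 _ => _ [d d0 <-]; exact: Sge.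
apply/ler_addgt0Pr => e e0.
have [d d0 Hd] := usc y t It e e0.
have Hlb : has_lbound [set sup (S d) | d in [set d : R | 0 < d]].
  by exists (w y t) => _ [d' d0' <-]; exact: Sge.
apply: le_trans (ge_inf Hlb _) _; first by exists d.
apply: ge_sup; first exact: Sn0.
by move=> _ [s [Is Hs] <-]; apply/ltW/Hd.
Qed.

Lemma lstar_eq (w : int -> R -> R) : poly_growth w -> lsc_t w ->
  forall y t, inI t -> lstar w y t = w y t.
Proof.
move=> pg lsc y t It.
have [B HB] := @pg_bound w pg y.
pose S d := [set w y s | s in [set s | inI s /\ `|s - t| < d]].
have Sn0 d : 0 < d -> S d !=set0.
  by move=> d0; exists (w y t); exists t => //; split => //; rewrite subrr normr0.
have Slb d : has_lbound (S d).
  exists (- B) => _ [s [Is _] <-].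
  by have := HB s Is; rewrite ler_norml => /andP[].
have Sle d : 0 < d -> inf (S d) <= w y t.
  move=> d0; apply: ge_inf (Slb d) _ _.
  by exists t => //; split => //; rewrite subrr normr0.
rewrite /lstar -/S.
have Tn0 : [set inf (S d) | d in [set d : R | 0 < d]] !=set0.
  by exists (inf (S 1)); exists 1 => //; exact: ltr01.
apply/eqP; rewrite eq_le; apply/andP; split.
  apply: ge_sup Tn0 _ => _ [d d0 <-]; exact: Sle.
apply/ler_addgt0Pr => e e0; rewrite -lerBlDr.
have [d d0 Hd] := lsc y t It e e0.
have Hub : has_ubound [set inf (S d) | d in [set d : R | 0 < d]].
  by exists (w y t) => _ [d' d0' <-]; exact: Sle.
apply: le_trans _ (ub_le_sup Hub _); last by exists d.
apply: lb_le_inf; first exact: Sn0.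
by move=> _ [s [Is Hs] <-]; apply/ltW/Hd.
Qed.

Lemma C1_poly (P : int -> {poly R}) :
  C1_t (fun y t => (P y).[t]) (fun y t => ((P y)^`()).[t]).
Proof.
move=> y; split; last by apply: continuous_subspaceT => x; exact: continuous_horner.
move=> t It.
have Hd := @derivable_horner R (P y) t.
have Ev : 'D_1 (horner (P y)) t = ((P y)^`()).[t].
  exact: (@derive_val _ _ _ _ _ _ _ (is_derive_poly (P y) t)).
rewrite -Ev.
have -> : (fun h : R => h^-1 * ((P y).[t + h] - (P y).[t])) =
  (fun h => h^-1 *: ((horner (P y) \o shift t) (h *: 1) - (P y).[t])).
  apply/funext => h /=; rewrite -[h%:A]/(h * 1) mulr1 [h + t]addrC.
  by [].  
move: Hd; apply: cvg_trans.
apply: cvg_fmap2; apply: within_subset => h [] //.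
Qed.

Lemma absz_step (y : int) (Y : nat) : (absz y <= Y.+1)%N ->
  (absz y <= Y)%N \/ y = (Y.+1)%:Z \/ y = - (Y.+1)%:Z.
Proof.
case: y => n /=.
  by rewrite leq_eqVlt ltnS => /orP [/eqP ->|]; [right; left|left].
rewrite NegzE ltnS leq_eqVlt => /orP [/eqP ->|]; [right; right|left] => //.
Qed.

Lemma fin_argmax (F : int -> R) (Y : nat) :
  exists2 y, (absz y <= Y)%N & forall z, (absz z <= Y)%N -> F z <= F y.
Proof.
elim: Y => [|Y [y Hy IH]].
  exists 0 => // z; rewrite leqn0 absz_eq0 => /eqP ->; exact: lexx.
have [x xin Hx] := @seq_argmax _ F [:: y; (Y.+1)%:Z; - (Y.+1)%:Z] isT.
exists x.
  move: xin; rewrite !inE => /orP [/eqP ->|/orP [/eqP ->|/eqP ->]] //.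
  exact: leqW.
move=> z /absz_step [Hz|[->|->]].
- apply: le_trans (IH _ Hz) _; apply: Hx; exact: mem_head.
- by apply: Hx; rewrite !inE eqxx orbT.
- by apply: Hx; rewrite !inE eqxx !orbT.
Qed.

Lemma poly_cont (Q : {poly R}) (x0 e : R) : 0 < e ->
  exists2 d : R, 0 < d & forall x, `|x - x0| < d -> `|Q.[x] - Q.[x0]| < e.
Proof.
move=> e0.
have := @cvgr_dist_lt _ _ _ _ _ (horner Q) Q.[x0] (@continuous_horner R Q x0) e e0.
move=> H; have [d d0 Hd] := (nbhs_ballP _ _).1 (H _); exists d => // x hx.
rewrite distrC; apply: Hd; rewrite -ball_normE /= distrC //.
Qed.

Lemma growth_help (x : R) (j k : nat) : 0 <= x -> (j <= k)%N ->
  1 + x ^+ j <= 2 * (1 + x) ^+ k.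
Proof.
move=> x0 jk.
have h1 : 1 <= 1 + x by rewrite lerDl.
have h2 : x ^+ j <= (1 + x) ^+ j.
  by apply: lerXn2r; rewrite ?nnegrE ?lerDr ?(le_trans ler01 h1).
have h3 : (1 + x) ^+ j <= (1 + x) ^+ k by exact: ler_weXn2l.
have h4 := exprn_ege1 k h1.
lra.
Qed.

End Aux.

Theorem lemmaA3 (R : realType) (beta : R) (u v : int -> R -> R) :
  0 < beta ->
  poly_growth u -> poly_growth v ->
  usc_t u -> visc_sub beta u ->
  lsc_t v -> visc_super beta v ->
  (forall y : int, u y 1 <= v y 1) ->
  forall (y : int) (t : R), 0 <= t < 1 -> u y t <= v y t.
Proof.
move=> beta0 pgu pgv uscu subu lscv supv Hterm y0 t0 /andP[t00 t01].
have It0 : inI t0 by rewrite /inI t00 ltW.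
have I1 : inI (1 : R) by rewrite /inI ler01 lexx.
rewrite leNgt; apply/negP => Hlt.
have [Cu [ku Hu]] := pgu; have [Cv [kv Hv]] := pgv.
pose k := (ku + kv)%N.
pose C : R := 2 * (`|Cu| + `|Cv|).
have Cge : 0 <= C by rewrite /C mulr_ge0 // addr_ge0.
pose N (y : int) : R := 1 + `|y|%:~R.
have Nge (y : int) : 0 <= (`|y|%:~R : R) by rewrite ler0z normr_ge0.
have N1 y : 1 <= N y by rewrite /N lerDl.
have N0 y : 0 < N y by apply: lt_le_trans (N1 y); exact: ltr01.
have HbU y s : inI s -> `|u y s| <= C * N y ^+ k.
  move=> Is; apply: le_trans (Hu y s Is) _.
  have h := @growth_help R _ _ _ (Nge y) (leq_addr kv ku).
  have hA : 0 <= 1 + (`|y|%:~R : R) ^+ ku by rewrite addr_ge0 // exprn_ge0.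
  have hC : Cu <= `|Cu| by exact: ler_norm.
  have h1 : Cu * (1 + (`|y|%:~R : R) ^+ ku) <= `|Cu| * (1 + (`|y|%:~R : R) ^+ ku).
    exact: ler_wpM2r.
  have h2 : `|Cu| * (1 + (`|y|%:~R : R) ^+ ku) <= `|Cu| * (2 * N y ^+ k).
    exact: ler_wpM2l.
  have h3 : 0 <= `|Cv| * N y ^+ k by rewrite mulr_ge0 // exprn_ge0 // ltW.
  rewrite /C; lra.
have HbV y s : inI s -> `|v y s| <= C * N y ^+ k.
  move=> Is; apply: le_trans (Hv y s Is) _.
  have h := @growth_help R _ _ _ (Nge y) (leq_addl ku kv).
  have hA : 0 <= 1 + (`|y|%:~R : R) ^+ kv by rewrite addr_ge0 // exprn_ge0.
  have hC : Cv <= `|Cv| by exact: ler_norm.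
  have h1 : Cv * (1 + (`|y|%:~R : R) ^+ kv) <= `|Cv| * (1 + (`|y|%:~R : R) ^+ kv).
    exact: ler_wpM2r.
  have h2 : `|Cv| * (1 + (`|y|%:~R : R) ^+ kv) <= `|Cv| * (2 * N y ^+ k).
    exact: ler_wpM2l.
  have h3 : 0 <= `|Cu| * N y ^+ k by rewrite mulr_ge0 // exprn_ge0 // ltW.
  rewrite /C; lra.
pose g (y : int) : R := N y ^+ k.+1.
have g0 y : 0 < g y by rewrite /g exprn_gt0.
pose K : R := 2 ^+ k.+2.
have K0 : 0 < K by rewrite /K exprn_gt0.
have Nstep (y z : int) : `|z| <= 1 -> N (y + z) <= 2 * N y.
  move=> z1; rewrite /N.
  have : `|y + z| <= `|y| + 1.
    by apply: le_trans (ler_normD _ _) _; rewrite lerD2l.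
  rewrite -(ler_int R) intrD => H.
  have := Nge y; lra.
have gstep (y z : int) : `|z| <= 1 -> g (y + z) <= 2 ^+ k.+1 * g y.
  move=> z1; rewrite /g -exprMn; apply: lerXn2r; rewrite ?nnegrE.
  - exact: ltW (N0 _).
  - by rewrite mulr_ge0 // ltW.
  - exact: Nstep.
have Hlap y : g (y + 1) + g (y - 1) - 2 * g y <= K * g y.
  have h1 : g (y + 1) <= 2 ^+ k.+1 * g y by apply: gstep; rewrite normr1.
  have h2 : g (y - 1) <= 2 ^+ k.+1 * g y by apply: gstep; rewrite normrN normr1.
  have := g0 y; rewrite /K exprS; lra.
have [pp Hp] : exists pp : nat, 2 * beta * K < pp%:R.
  exists (Num.Def.archi_bound (2 * beta * K)); apply: archi_boundP; nra.
pose p := pp.+1.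
pose a (t : R) : R := (2 - t) ^+ p.
have a1 t : inI t -> 1 <= a t.
  move=> /andP[_ t1]; apply: exprn_ege1; lra.
pose gam := u y0 t0 - v y0 t0.
have gam0 : 0 < gam by rewrite /gam subr_gt0.
pose del := gam / (2 * (g y0 * a t0)).
have ga0 : 0 < g y0 * a t0 by rewrite mulr_gt0 // (lt_le_trans ltr01 (a1 _ It0)).
have del0 : 0 < del by rewrite /del divr_gt0 // mulr_gt0.
pose psi y t := del * g y * a t.
have psi0 y t : inI t -> 0 <= psi y t.
  move=> It; apply: mulr_ge0; last exact: le_trans ler01 (a1 _ It).
  by apply: mulr_ge0; apply: ltW.
pose m0 := gam / 2.
have m00 : 0 < m0 by rewrite /m0 divr_gt0.
have Hpsi0 : psi y0 t0 = m0.
  rewrite /psi /m0 /del -mulrA; field.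
  by rewrite !gt_eqF // (lt_le_trans ltr01 (a1 _ It0)).
pose Y := Num.Def.archi_bound (2 * C / del).
have HY : 2 * C / del < Y%:R.
  by rewrite /Y; apply: archi_boundP; apply: divr_ge0 (ltW del0); nra.
have absR (y : int) : (`|y|%:~R : R) = (absz y)%:R by rewrite natr_absz.
have Hout y : ~~ (absz y <= Y)%N -> forall t s, inI t -> inI s ->
    u y t - v y s - psi y t < 0.
  rewrite -ltnNge => yY t s It Is.
  have hN : Y%:R < N y.
    rewrite /N absR; have : (Y%:R : R) < (absz y)%:R by rewrite ltr_nat.
    lra.
  have hdN : 2 * C < del * N y.
    have := HY; rewrite ltr_pdivrMr // => h; nra.
  have hu := HbU y t It; have hv := HbV y s Is.
  have hu' := ler_norm (u y t); have hv' : - v y s <= `|v y s| by rewrite -normrN ler_norm.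
  have hNk : 0 < N y ^+ k by rewrite exprn_gt0.
  have hpsi : del * N y * N y ^+ k <= psi y t.
    rewrite /psi /g exprS mulrA -[X in X <= _]mulr1; apply: ler_wpM2l.
      by apply: mulr_ge0; [apply: mulr_ge0; apply: ltW | apply: ltW].
    exact: a1.
  have : 2 * C * N y ^+ k < del * N y * N y ^+ k by rewrite ltr_pM2r.
  lra.
pose B : R := 2 * C * (1 + Y%:R) ^+ k.
have HinB y : (absz y <= Y)%N -> forall t s, inI t -> inI s ->
    u y t - v y s - psi y t <= B.
  move=> yY t s It Is.
  have hN : N y ^+ k <= (1 + Y%:R) ^+ k.
    apply: lerXn2r; rewrite ?nnegrE ?(ltW (N0 y)) ?addr_ge0 //.
    by rewrite /N absR lerD2l ler_nat.
  have hu := HbU y t It; have hv := HbV y s Is.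
  have hu' := ler_norm (u y t); have hv' : - v y s <= `|v y s| by rewrite -normrN ler_norm.
  have := psi0 y t It.
  have : C * N y ^+ k <= C * (1 + Y%:R) ^+ k by exact: ler_wpM2l.
  rewrite /B; lra.
have B0 : 0 <= B by rewrite /B !mulr_ge0 // exprn_ge0 // addr_ge0.
have Hterm_d y : exists d : R, 0 < d /\ forall t s, inI t -> inI s ->
    `|t - 1| < d -> `|s - 1| < d -> u y t - v y s < m0.
  have e0 : 0 < m0 / 2 by rewrite divr_gt0.
  have [d1 d10 Hd1] := uscu y 1 I1 _ e0.
  have [d2 d20 Hd2] := lscv y 1 I1 _ e0.
  exists (Num.min d1 d2); split; first by rewrite lt_min d10 d20.
  move=> t s It Is; rewrite !lt_min => /andP[h1 _] /andP[_ h2].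
  have := Hd1 t It h1; have := Hd2 s Is h2; have := Hterm y; lra.
have [dd Hdd] := choice Hterm_d.
have [yeta _ Hyeta] := @fin_argmax R (fun y => - dd y) Y.
pose eta := dd yeta.
have eta0 : 0 < eta by have [] := Hdd yeta.
have Heta y : (absz y <= Y)%N -> forall t s, inI t -> inI s ->
    `|t - 1| < eta -> `|s - 1| < eta -> u y t - v y s < m0.
  move=> yY t s It Is h1 h2.
  have hle : eta <= dd y by have := Hyeta y yY; rewrite lerN2.
  have [_ H] := Hdd y; apply: H => //; exact: lt_le_trans hle.
pose ka := (B + 1) / eta ^+ 2.
have ka0 : 0 < ka by rewrite /ka divr_gt0 ?exprn_gt0 // ltr_pwDr.
pose G y t s := u y t - v y s - psi y t - ka * (t - s) ^+ 2.
pose Qpsi (y : int) : {poly R} := (del * g y)%:P * (2%:P - 'X) ^+ p.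
have EQpsi y t : (Qpsi y).[t] = psi y t.
  by rewrite /Qpsi /psi /a !hornerE.
pose Qq : {poly R} := ka%:P * 'X ^+ 2.
have EQq x : Qq.[x] = ka * x ^+ 2 by rewrite /Qq !hornerE.
have Gusc y t s : inI t -> inI s -> forall m, G y t s < m ->
    exists2 d : R, 0 < d & forall t' s', inI t' -> inI s' ->
       `|t' - t| < d -> `|s' - s| < d -> G y t' s' < m.
  move=> It Is m Hm.
  pose e := (m - G y t s) / 4.
  have e0 : 0 < e by rewrite /e divr_gt0 // subr_gt0.
  have [d1 d10 Hd1] := uscu y t It _ e0.
  have [d2 d20 Hd2] := lscv y s Is _ e0.
  have [d3 d30 Hd3] := @poly_cont R (Qpsi y) t e e0.
  have [d4 d40 Hd4] := @poly_cont R Qq (t - s) e e0.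
  exists (Num.min (Num.min d1 d2) (Num.min d3 (d4 / 2))).
    by rewrite !lt_min d10 d20 d30 divr_gt0.
  move=> t' s' It' Is'; rewrite !lt_min => /andP[/andP[h1 _] /andP[h3 h4]].
  move=> /andP[/andP[_ h2] /andP[_ h4']].
  have u1 := Hd1 t' It' h1.
  have v1 := Hd2 s' Is' h2.
  have p1 := Hd3 t' h3; rewrite !EQpsi ltr_distl in p1.
  have hts : `|(t' - s') - (t - s)| < d4.
    have -> : (t' - s') - (t - s) = (t' - t) - (s' - s) by ring.
    apply: le_lt_trans (ler_normB _ _) _; lra.
  have q1 := Hd4 _ hts; rewrite !EQq ltr_distl in q1.
  move: p1 q1 => /andP[p1 _] /andP[q1 _].
  have he : m = G y t s + 4 * e by rewrite /e; field.
  move: he; rewrite /G => he; lra.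
have Hmax y : exists ts : R * R, [/\ inI ts.1, inI ts.2 &
    forall t' s', inI t' -> inI s' -> G y t' s' <= G y ts.1 ts.2].
  have [t [s [It Is H]]] := @max2 R (G y) (Gusc y).
  by exists (t, s).
have [TS HTS] := choice Hmax.
have [ys Wys Hys] := @fin_argmax R (fun y => G y (TS y).1 (TS y).2) Y.
pose ts := (TS ys).1; pose ss := (TS ys).2.
have [Its Iss _] := HTS ys.
pose M := G ys ts ss.
have HG0 : G y0 t0 t0 = m0.
  by rewrite /G subrr expr0n /= mulr0 subr0 -/gam Hpsi0 /m0; field.
have W0 : (absz y0 <= Y)%N.
  apply: contraT => /Hout /(_ t0 t0 It0 It0); rewrite -/gam Hpsi0 /m0; lra.
have HM0 : m0 <= M.
  rewrite -HG0; apply: le_trans (Hys y0 W0); have [_ _ H] := HTS y0; exact: H.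
have Hglob y t s : inI t -> inI s -> G y t s <= M.
  move=> It Is; case: (boolP (absz y <= Y)%N) => Wy.
    apply: le_trans (Hys y Wy); have [_ _ H] := HTS y; exact: H.
  have := Hout y Wy t s It Is.
  have : 0 <= ka * (t - s) ^+ 2 by rewrite mulr_ge0 ?sqr_ge0 // ltW.
  rewrite /G; lra.
have Hclose : `|ts - ss| < eta.
  rewrite ltNge; apply/negP => H.
  have H2 : eta ^+ 2 <= (ts - ss) ^+ 2.
    rewrite -[(ts - ss) ^+ 2]real_normK ?num_real //.
    by apply: lerXn2r; rewrite ?nnegrE ?normr_ge0 // ltW.
  have H3 : ka * eta ^+ 2 = B + 1 by rewrite /ka; field; rewrite gt_eqF.
  have H4 : ka * eta ^+ 2 <= ka * (ts - ss) ^+ 2 by apply: ler_wpM2l; [exact: ltW | exact: H2].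
  have := HinB ys Wys ts ss Its Iss.
  have : M = G ys ts ss by [].
  rewrite /G; lra.
have Hnot1 t s : inI t -> inI s -> `|t - s| < eta -> (t = 1 \/ s = 1) ->
    ~ (G ys t s = M).
  move=> It Is hts [E|E] HM; [subst t | subst s].
  - have h : u ys 1 - v ys s < m0.
      apply: (Heta ys Wys 1 s I1 Is); first by rewrite subrr normr0.
      by rewrite distrC.
    have := psi0 ys 1 I1; have : 0 <= ka * (1 - s) ^+ 2 by rewrite mulr_ge0 ?sqr_ge0 // ltW.
    move: HM; rewrite /G; lra.
  - have h : u ys t - v ys 1 < m0.
      by apply: (Heta ys Wys t 1 It I1) => //; rewrite subrr normr0.
    have := psi0 ys t It; have : 0 <= ka * (t - 1) ^+ 2 by rewrite mulr_ge0 ?sqr_ge0 // ltW.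
    move: HM; rewrite /G; lra.
have ts1 : ts < 1.
  rewrite lt_neqAle; have /andP[_ ->] := Its; rewrite andbT.
  apply/eqP => E; exact: (Hnot1 ts ss Its Iss Hclose (or_introl E) erefl).
have ss1 : ss < 1.
  rewrite lt_neqAle; have /andP[_ ->] := Iss; rewrite andbT.
  apply/eqP => E; exact: (Hnot1 ts ss Its Iss Hclose (or_intror E) erefl).
pose P1 (y : int) : {poly R} :=
  (v y ss)%:P + Qpsi y + ka%:P * ('X - ss%:P) ^+ 2.
have EP1 y t : (P1 y).[t] = v y ss + psi y t + ka * (t - ss) ^+ 2.
  by rewrite /P1 !hornerD EQpsi !hornerE.
have D1 : ((P1 ys)^`()).[ts] =
    - (del * g ys * (p%:R * (2 - ts) ^+ pp)) + ka * (2 * (ts - ss)).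
  rewrite /P1 /Qpsi !derivCE !hornerE /= hornerMn hornerM horner_exp !hornerE -mulr_natr; ring.
have ts01 : 0 <= ts < 1 by case/andP: Its => -> _; rewrite ts1.
have ss01 : 0 <= ss < 1 by case/andP: Iss => -> _; rewrite ss1.
have Hs := subu ys ts ts01 (fun y t => (P1 y).[t]) (fun y t => ((P1 y)^`()).[t])
  (@C1_poly R P1).
have {}Hs : - ((P1 ys)^`()).[ts] - beta * dlap (ustar u) ys ts <= 0.
  apply: Hs => y' t' It'.
  rewrite !(@ustar_eq R u pgu uscu) // !EP1.
  have := Hglob y' t' ss It' Iss; rewrite /M /G; lra.
have Eu : dlap (ustar u) ys ts = dlap u ys ts.
  by rewrite /dlap !(@ustar_eq R u pgu uscu).
rewrite D1 Eu in Hs.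
pose P2 (y : int) : {poly R} :=
  (u y ts - psi y ts)%:P - ka%:P * ('X - ts%:P) ^+ 2.
have EP2 y s : (P2 y).[s] = u y ts - psi y ts - ka * (s - ts) ^+ 2.
  by rewrite /P2 !hornerE.
have D2 : ((P2 ys)^`()).[ss] = - (ka * (2 * (ss - ts))).
  rewrite /P2 !derivCE !hornerE /=; ring.
have Hsp := supv ys ss ss01 (fun y t => (P2 y).[t]) (fun y t => ((P2 y)^`()).[t])
  (@C1_poly R P2).
have {}Hsp : - ((P2 ys)^`()).[ss] - beta * dlap (lstar v) ys ss >= 0.
  apply: Hsp => y' s' Is'.
  rewrite !(@lstar_eq R v pgv lscv) // !EP2.
  have e1 : (s' - ts) ^+ 2 = (ts - s') ^+ 2 by rewrite -sqrrN opprB.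
  have e2 : (ss - ts) ^+ 2 = (ts - ss) ^+ 2 by rewrite -sqrrN opprB.
  have := Hglob y' ts s' Its Is'; rewrite /M /G; lra.
have Ev : dlap (lstar v) ys ss = dlap v ys ss.
  by rewrite /dlap !(@lstar_eq R v pgv lscv).
rewrite D2 Ev in Hsp.
pose A' := (2 - ts) ^+ pp.
pose c := 2 - ts.
pose Z := del * A' * g ys.
have c1 : 1 <= c by rewrite /c; case/andP: Its => _; lra.
have c2 : c <= 2 by rewrite /c; case/andP: Its; lra.
have A0 : 0 < A' by rewrite /A' exprn_gt0 // (lt_le_trans ltr01 c1).
have Z0 : 0 < Z by rewrite /Z; apply: mulr_gt0; [exact: mulr_gt0 | exact: g0].
have Ea y : psi y ts = (del * A' * c) * g y by rewrite /psi /a /p exprS /A' /c; ring.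
have w0 : 0 <= del * A' * c by apply: mulr_ge0; [apply: mulr_ge0; apply: ltW | apply: le_trans c1].  
have Hd : (del * A' * c) * (g (ys + 1) + g (ys - 1) - 2 * g ys) <=
    (del * A' * c) * (K * g ys) by exact: ler_wpM2l.
have n1 := Hglob (ys + 1) ts ss Its Iss.
have n2 := Hglob (ys - 1) ts ss Its Iss.
rewrite /M /G !Ea in n1 n2.
have HD : dlap u ys ts - dlap v ys ss <= c * K * Z.
  have -> : c * K * Z = (del * A' * c) * (K * g ys) by rewrite /Z; ring.
  rewrite /dlap; lra.
have HD2 : beta * (dlap u ys ts - dlap v ys ss) <= beta * (c * K * Z).
  by apply: ler_wpM2l => //; exact: ltW.
have H1 : beta * K * Z * c <= beta * K * Z * 2.
  apply: ler_wpM2l => //; apply/ltW; apply: mulr_gt0 => //; exact: mulr_gt0.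
have H2 : 2 * beta * K * Z < pp%:R * Z by rewrite ltr_pM2r.
have Ep : del * g ys * (p%:R * (2 - ts) ^+ pp) = pp%:R * Z + Z.
  by rewrite /Z /A' /p -addn1 natrD; ring.
have E3 : beta * (dlap u ys ts - dlap v ys ss) =
  beta * dlap u ys ts - beta * dlap v ys ss by ring.
have E4 : beta * (c * K * Z) = beta * K * Z * c by ring.
have E5 : beta * K * Z * 2 = 2 * beta * K * Z by ring.
rewrite Ep in Hs.
have F1 : pp%:R * Z + Z <= beta * dlap u ys ts - beta * dlap v ys ss by lra.
have F2 : pp%:R * Z + Z <= 2 * beta * K * Z by lra.
lra.
Qed.
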